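(* Let $h>0$ and $\mathbb{T}:=\{0,h,2h,3h,\ldots\}$. Let $p_0,p_1\in\mathbb{C}\setminus\{-\tfrac{1}{h}\}$ with $p_0\ne p_1$, and define $p:\mathbb{T}\to\mathbb{C}$ by $p(t)=p_0$ if $\tfrac{t}{h}\equiv 0 \pmod 2$ and $p(t)=p_1$ if $\tfrac{t}{h}\equiv 1\pmod 2$. Consider the equation $$\Delta_h x(t)-p(t)x(t)=0,\qquad t\in\mathbb{T},\qquad (\ast)$$ where $\Delta_h x(t):=\frac{x(t+h)-x(t)}{h}$. Assume $0<|1+hp_0||1+hp_1|\ne 1$. Let $\varepsilon>0$ be fixed and let $\phi:\mathbb{T}\to\mathbb{C}$ satisfy $|\Delta_h\phi(t)-p(t)\phi(t)|\le\varepsilon$ for all $t\in\mathbb{T}$. Let $e_p(t):=\prod_{j=0}^{t/h-1}(1+hp(jh))$ for $t\in\mathbb{T}$ (empty product $=1$, so $e_p(0)=1$). Then: (i) If $|1+hp_0||1+hp_1|>1$, then $\lim_{t\to\infty}\frac{\phi(t)}{e_p(t)}$ exists, and the function $x(t):=\left(\lim_{s\to\infty}\frac{\phi(s)}{e_p(s)}\right)e_p(t)$ is the unique solution of $(\ast)$ with $|\phi(t)-x(t)|\le K_1\varepsilon$ for all $t\in\mathbb{T}$, where $$K_1:=h\max\left\{\frac{1+|1+hp_0|}{-1+|1+hp_0||1+hp_1|},\ \frac{1+|1+hp_1|}{-1+|1+hp_0||1+hp_1|}\right\};$$ moreover $K_1$ is the minimum Ulam stability constant for $(\ast)$. (ii)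 If $0<|1+hp_0||1+hp_1|<1$, then any solution $x$ of $(\ast)$ with $|\phi(0)-x(0)|<\varepsilon h\,\frac{1+|1+hp_1|}{1-|1+hp_0||1+hp_1|}$ satisfies $$|\phi(t)-x(t)|<\varepsilon h\max\left\{\frac{1+|1+hp_0|}{1-|1+hp_0||1+hp_1|},\ \frac{1+|1+hp_1|}{1-|1+hp_0||1+hp_1|}\right\}$$ for all $t\in\mathbb{T}$.
   Context: A constant $K>0$ is an Ulam stability constant for $(\ast)$ on $\mathbb{T}$ if for every $\varepsilon>0$ and every $\phi:\mathbb{T}\to\mathbb{C}$ with $|\Delta_h\phi(t)-p(t)\phi(t)|\le\varepsilon$ for all $t\in\mathbb{T}$, there exists a solution $x:\mathbb{T}\to\mathbb{C}$ of $(\ast)$ with $|\phi(t)-x(t)|\le K\varepsilon$ for all $t\in\mathbb{T}$. The equation has Ulam stability if such a $K$ exists. ''Minimum Ulam stability constant'' means $K_1$ is an Ulam stability constant and no positive number smaller than $K_1$ is one. *)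

(* Defs.v *)
From Stdlib Require Import Reals Lra.
From Coquelicot Require Import Coquelicot.
Open Scope C_scope.

(* The time scale T = {0, h, 2h, ...} is parametrized by n : nat via t = n*h;
   a function T -> C is represented as a function nat -> C. *)

Definition delta_h (h : R) (x : nat -> C) (n : nat) : C :=
  (x (S n) - x n) / RtoC h.

Definition pcoef (p0 p1 : C) (n : nat) : C :=
  if Nat.even n then p0 else p1.

Fixpoint ep (h : R) (p0 p1 : C) (n : nat) : C :=
  match n with
  | O => 1
  | S m => ep h p0 p1 m * (1 + RtoC h * pcoef p0 p1 m)
  end.

Definition is_solution (h : R) (p0 p1 : C) (x : nat -> C) : Prop :=
  forall n, delta_h h x n - pcoef p0 p1 n * x n = 0.

Definition ulam_constant (h : R) (p0 p1 : C) (K : R) : Prop :=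
  (0 < K)%R /\
  forall eps : R, (0 < eps)%R ->
  forall phi : nat -> C,
    (forall n, (Cmod (delta_h h phi n - pcoef p0 p1 n * phi n) <= eps)%R) ->
    exists x : nat -> C, is_solution h p0 p1 x /\
      forall n, (Cmod (phi n - x n) <= K * eps)%R.

Definition min_ulam_constant (h : R) (p0 p1 : C) (K : R) : Prop :=
  ulam_constant h p0 p1 K /\
  forall K' : R, (0 < K')%R -> (K' < K)%R -> ~ ulam_constant h p0 p1 K'.

(* Main.v *)
Require Import Defs.
From Stdlib Require Import Reals Lra Lia.
From Coquelicot Require Import Coquelicot.
Open Scope C_scope.

Section S.
Variables (h : R) (p0 p1 : C).
Hypothesis hpos : (0 < h)%R.

Definition aa (n : nat) : C := 1 + RtoC h * pcoef p0 p1 n.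
Definition A0 : R := Cmod (1 + RtoC h * p0).
Definition A1 : R := Cmod (1 + RtoC h * p1).
Definition PP : R := (A0 * A1)%R.
Hypothesis hP : (0 < PP)%R.

Lemma hC : RtoC h <> 0.
Proof. intro H. injection H. lra. Qed.

Lemma A0pos : (0 < A0)%R.
Proof. unfold PP in hP. pose proof (Cmod_ge_0 (1 + RtoC h * p0)).
  pose proof (Cmod_ge_0 (1 + RtoC h * p1)). unfold A0, A1 in *.
  destruct H; auto. rewrite <- H in hP. lra. Qed.
Lemma A1pos : (0 < A1)%R.
Proof. unfold PP in hP. pose proof (Cmod_ge_0 (1 + RtoC h * p0)).
  pose proof (Cmod_ge_0 (1 + RtoC h * p1)). unfold A0, A1 in *.
  destruct H0; auto. rewrite <- H0 in hP. lra. Qed.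

Lemma Cmod_aa n : Cmod (aa n) = if Nat.even n then A0 else A1.
Proof. unfold aa, pcoef. destruct (Nat.even n); reflexivity. Qed.

Lemma Cmod_aa_pos n : (0 < Cmod (aa n))%R.
Proof. rewrite Cmod_aa. destruct (Nat.even n); [apply A0pos|apply A1pos]. Qed.

Lemma aa_nz n : aa n <> 0.
Proof. intro H. pose proof (Cmod_aa_pos n). rewrite H, Cmod_0 in H0. lra. Qed.

Lemma ep_S n : ep h p0 p1 (S n) = ep h p0 p1 n * aa n.
Proof. reflexivity. Qed.

Lemma Cmod_ep_pos n : (0 < Cmod (ep h p0 p1 n))%R.
Proof. induction n. simpl. rewrite Cmod_1. lra.
  rewrite ep_S, Cmod_mult. pose proof (Cmod_aa_pos n). nra. Qed.

Lemma ep_nz n : ep h p0 p1 n <> 0.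
Proof. intro H. pose proof (Cmod_ep_pos n). rewrite H, Cmod_0 in H0. lra. Qed.

Lemma step_gen (x : nat -> C) n :
  x (S n) = aa n * x n + RtoC h * (delta_h h x n - pcoef p0 p1 n * x n).
Proof. unfold aa, delta_h. pose proof hC. field. auto. Qed.

Lemma sol_step x n : is_solution h p0 p1 x -> x (S n) = aa n * x n.
Proof. intro H. rewrite step_gen, (H n). ring. Qed.

Lemma sol_ep x n : is_solution h p0 p1 x -> x n = x 0%nat * ep h p0 p1 n.
Proof. intro H. induction n. simpl. ring.
  rewrite (sol_step _ _ H), IHn, ep_S. ring. Qed.

Lemma ep_sol c : is_solution h p0 p1 (fun n => c * ep h p0 p1 n).
Proof. intro n. unfold delta_h. simpl. pose proof hC. field. auto. Qed.

Lemma Cmod_ep_2 k : Cmod (ep h p0 p1 (2 * k)) = (PP ^ k)%R /\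
                    Cmod (ep h p0 p1 (2 * k + 1)) = (PP ^ k * A0)%R.
Proof.
  induction k.
  - simpl. rewrite Cmod_mult, Cmod_1. unfold aa, pcoef. simpl. fold A0. split; ring.
  - destruct IHk as [H1 H2].
    assert (E1 : (2 * S k = S (2 * k + 1))%nat) by lia.
    assert (E2 : (2 * S k + 1 = S (S (2 * k + 1)))%nat) by lia.
    assert (E3 : (2 * k + 1 = S (2 * k))%nat) by lia.
    rewrite E2, E1, !ep_S, !Cmod_mult, !Cmod_aa, H2.
    rewrite Nat.even_odd.
    replace (S (2 * k + 1)) with (2 * (S k))%nat by lia.
    rewrite Nat.even_even. unfold PP. split; simpl; ring.
Qed.

Lemma unbounded_zero (c : C) (M : R) :
  (1 < PP)%R -> (forall n, (Cmod c * Cmod (ep h p0 p1 n) <= M)%R) -> c = 0.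
Proof.
  intros H1 HM. destruct (Ceq_dec c 0) as [|Hc]; auto. exfalso.
  apply Cmod_gt_0 in Hc.
  assert (HR : (Rabs PP > 1)%R) by (rewrite Rabs_pos_eq; lra).
  destruct (Pow_x_infinity PP HR (M / Cmod c + 1)) as [N HN].
  specialize (HN N (le_n N)). rewrite Rabs_pos_eq in HN by (apply pow_le; lra).
  destruct (Cmod_ep_2 N) as [E _]. specialize (HM (2 * N)%nat). rewrite E in HM.
  assert (M / Cmod c * Cmod c = M)%R by (field; lra).
  nra.
Qed.

Lemma ep_lower K n : (1 < PP)%R -> (2 * K <= n)%nat ->
  (PP ^ K * Rmin 1 A0 <= Cmod (ep h p0 p1 n))%R.
Proof.
  intros H1 Hn. pose proof A0pos.
  assert (Hm : (0 < Rmin 1 A0)%R) by (apply Rmin_glb_lt; lra).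
  destruct (Nat.Even_or_Odd n) as [[k Hk]|[k Hk]]; subst n.
  - destruct (Cmod_ep_2 k) as [E _]. rewrite E.
    assert (PP ^ K <= PP ^ k)%R by (apply Rle_pow; lia || lra).
    pose proof (Rmin_l 1 A0). pose proof (pow_le PP K ltac:(lra)). nra.
  - destruct (Cmod_ep_2 k) as [_ E]. rewrite E.
    assert (PP ^ K <= PP ^ k)%R by (apply Rle_pow; lia || lra).
    pose proof (Rmin_r 1 A0). pose proof (pow_le PP K ltac:(lra)). nra.
Qed.

Lemma ep_big B : (1 < PP)%R -> exists N, forall n, (N <= n)%nat -> (B < Cmod (ep h p0 p1 n))%R.
Proof.
  intros H1. pose proof A0pos.
  assert (Hm : (0 < Rmin 1 A0)%R) by (apply Rmin_glb_lt; lra).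
  assert (HR : (Rabs PP > 1)%R) by (rewrite Rabs_pos_eq; lra).
  destruct (Pow_x_infinity PP HR (Rabs B / Rmin 1 A0 + 1)) as [K HK].
  exists (2 * K)%nat. intros n Hn. specialize (HK K (le_n K)).
  rewrite Rabs_pos_eq in HK by (apply pow_le; lra).
  pose proof (ep_lower K n H1 Hn).
  assert (Rabs B / Rmin 1 A0 * Rmin 1 A0 = Rabs B)%R by (field; lra).
  pose proof (Rle_abs B). nra.
Qed.

Definition gg (n : nat) : R :=
  if Nat.even n then ((1 + A1) / (PP - 1))%R else ((1 + A0) / (PP - 1))%R.

Lemma gg_step n : (1 < PP)%R -> (gg n * Cmod (aa n) - gg (S n) = 1)%R.
Proof.
  intro H1. unfold gg. rewrite Cmod_aa, Nat.even_succ, <- Nat.negb_even.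
  destruct (Nat.even n); simpl; unfold PP in *; field; lra.
Qed.

Lemma gg_pos n : (1 < PP)%R -> (0 < gg n)%R.
Proof. intro H1. pose proof A0pos; pose proof A1pos. unfold gg.
  destruct (Nat.even n); apply Rdiv_lt_0_compat; lra. Qed.

Definition TT (n : nat) : R := (h * gg n / Cmod (ep h p0 p1 n))%R.

Lemma TT_step n : (1 < PP)%R -> (TT n - TT (S n) = h / Cmod (ep h p0 p1 (S n)))%R.
Proof.
  intro H1. unfold TT. pose proof (gg_step n H1). rewrite ep_S, Cmod_mult.
  pose proof (Cmod_ep_pos n). pose proof (Cmod_aa_pos n).
  replace (gg (S n)) with (gg n * Cmod (aa n) - 1)%R by lra. field. lra.
Qed.

Lemma TT_pos n : (1 < PP)%R -> (0 < TT n)%R.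
Proof. intro. unfold TT. pose proof (gg_pos n H). pose proof (Cmod_ep_pos n).
  apply Rdiv_lt_0_compat; nra. Qed.

Section Phi.
Hypothesis hP1 : (1 < PP)%R.
Variables (eps : R) (phi : nat -> C).
Hypothesis heps : (0 < eps)%R.
Hypothesis hphi : forall n, (Cmod (delta_h h phi n - pcoef p0 p1 n * phi n) <= eps)%R.

Definition uu n := phi n / ep h p0 p1 n.

Lemma uu_step n : (Cmod (uu (S n) - uu n) <= eps * (TT n - TT (S n)))%R.
Proof.
  rewrite TT_step by auto.
  assert (uu (S n) - uu n = RtoC h * (delta_h h phi n - pcoef p0 p1 n * phi n) / ep h p0 p1 (S n)).
  { unfold uu. rewrite (step_gen phi n). rewrite ep_S. pose proof (ep_nz n). pose proof (aa_nz n).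
    field. auto. }
  rewrite H, Cmod_div by apply ep_nz. rewrite Cmod_mult, Cmod_R, Rabs_pos_eq by lra.
  pose proof (hphi n). pose proof (Cmod_ep_pos (S n)).
  unfold Rdiv. assert (0 < / Cmod (ep h p0 p1 (S n)))%R by (apply Rinv_0_lt_compat; lra).
  set (i := (/ Cmod (ep h p0 p1 (S n)))%R) in *.
  set (x := Cmod (delta_h h phi n - pcoef p0 p1 n * phi n)) in *.
  assert (0 <= h * i * (eps - x))%R by (apply Rmult_le_pos; nra). nra.
Qed.

Lemma uu_diff n d : (Cmod (uu (n + d) - uu n) <= eps * (TT n - TT (n + d)))%R.
Proof.
  induction d.
  - rewrite Nat.add_0_r. unfold Cminus. rewrite Cplus_opp_r, Cmod_0. lra.
  - replace (uu (n + S d) - uu n) with ((uu (S (n + d)) - uu (n + d)) + (uu (n + d) - uu n))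
      by (rewrite Nat.add_succ_r; ring).
    eapply Rle_trans. apply Cmod_triangle. pose proof (uu_step (n + d)).
    rewrite Nat.add_succ_r. lra.
Qed.

Lemma uu_diff' n m : (n <= m)%nat -> (Cmod (uu m - uu n) <= eps * TT n)%R.
Proof.
  intro H. replace m with (n + (m - n))%nat by lia. pose proof (uu_diff n (m - n)).
  pose proof (TT_pos (n + (m - n)) hP1). nra.
Qed.

Lemma TT_small d : (0 < d)%R -> exists N, forall n, (N <= n)%nat -> (eps * TT n < d)%R.
Proof.
  intro Hd. pose proof A0pos; pose proof A1pos.
  set (G := ((1 + A0 + (1 + A1)) / (PP - 1))%R).
  destruct (ep_big (eps * h * G / d) hP1) as [N HN]. exists N. intros n Hn.
  specialize (HN n Hn). unfold TT.
  assert (gg n <= G)%R. { unfold gg, G. destruct (Nat.even n); unfold Rdiv;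
    apply Rmult_le_compat_r; try (apply Rlt_le, Rinv_0_lt_compat; lra); lra. }
  pose proof (Cmod_ep_pos n). pose proof (gg_pos n hP1).
  apply (Rmult_lt_reg_r (Cmod (ep h p0 p1 n))); auto.
  replace (eps * (h * gg n / Cmod (ep h p0 p1 n)) * Cmod (ep h p0 p1 n))%R with (eps * h * gg n)%R
    by (field; lra).
  assert (eps * h * G / d * d = eps * h * G)%R by (field; lra).
  assert (eps * h * gg n <= eps * h * G)%R by (apply Rmult_le_compat_l; nra).
  nra.
Qed.

Definition FF : (C -> Prop) -> Prop := filtermap uu eventually.

Lemma FF_proper : ProperFilter FF.
Proof. apply filtermap_proper_filter. apply eventually_filter. Qed.

Lemma FF_cauchy : cauchy FF.
Proof.
  intro d. destruct (TT_small d (cond_pos d)) as [N HN]. exists (uu N).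
  exists N. intros n Hn. apply (@norm_compat1 C_AbsRing C_NormedModule).
  eapply Rle_lt_trans. apply (uu_diff' N n Hn). apply HN. lia.
Qed.

Definition LL : C := lim (T:=C_CompleteNormedModule) FF.

Lemma LL_ball (d : posreal) : FF (ball LL d).
Proof. exact (complete_cauchy (T:=C_CompleteNormedModule) FF FF_proper FF_cauchy d). Qed.

Lemma uu_lim : filterlim uu eventually (locally LL).
Proof.
  intros Q [d Hd]. generalize (LL_ball d). unfold FF, filtermap. apply filter_imp.
  intros x Hx. apply Hd. exact Hx.
Qed.

Lemma LL_bound n : (Cmod (LL - uu n) <= eps * TT n)%R.
Proof.
  apply Rnot_lt_le. intro Hlt.
  set (X := Cmod (LL - uu n)) in *. set (Y := (eps * TT n)%R) in *.
  pose proof (@norm_factor_gt_0 _ C_NormedModule) as Hnf.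
  assert (Hd : (0 < (X - Y) / (2 * @norm_factor _ C_NormedModule))%R)
    by (apply Rdiv_lt_0_compat; lra).
  destruct (LL_ball (mkposreal _ Hd)) as [N HN].
  specialize (HN (max N n) (Nat.le_max_l _ _)).
  apply (@norm_compat2 C_AbsRing C_NormedModule) in HN. simpl in HN.
  change (norm (minus (uu (max N n)) LL)) with (Cmod (uu (max N n) - LL)) in HN.
  pose proof (uu_diff' n (max N n) (Nat.le_max_r _ _)).
  assert (X <= Cmod (uu (max N n) - LL) + Cmod (uu (max N n) - uu n))%R.
  { unfold X. replace (LL - uu n) with (- (uu (max N n) - LL) + (uu (max N n) - uu n)) by ring.
    eapply Rle_trans. apply Cmod_triangle. rewrite Cmod_opp. lra. }
  replace (norm_factor * ((X - Y) / (2 * norm_factor)))%R with ((X - Y) / 2)%R in HN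
    by (field; lra).
  fold Y in H. lra.
Qed.

Lemma phi_bound n : (Cmod (phi n - LL * ep h p0 p1 n) <= eps * h * gg n)%R.
Proof.
  replace (phi n - LL * ep h p0 p1 n) with (ep h p0 p1 n * - (LL - uu n)).
  2:{ unfold uu. pose proof (ep_nz n). field. auto. }
  rewrite Cmod_mult, Cmod_opp. pose proof (LL_bound n). pose proof (Cmod_ep_pos n).
  unfold TT in H.
  replace (eps * h * gg n)%R with (Cmod (ep h p0 p1 n) * (eps * (h * gg n / Cmod (ep h p0 p1 n))))%R
    by (field; lra).
  apply Rmult_le_compat_l; lra.
Qed.

End Phi.

Definition KK1 : R := (h * Rmax ((1 + A0) / (-1 + PP)) ((1 + A1) / (-1 + PP)))%R.

Lemma hgg_le n : (h * gg n <= KK1)%R.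
Proof.
  unfold KK1, gg. replace (-1 + PP)%R with (PP - 1)%R by ring.
  destruct (Nat.even n); apply Rmult_le_compat_l; try lra; [apply Rmax_r | apply Rmax_l].
Qed.

Lemma KK1_pos : (1 < PP)%R -> (0 < KK1)%R.
Proof. intro. pose proof (hgg_le 0). pose proof (gg_pos 0 H). nra. Qed.

Definition phiex (n : nat) : C := - RtoC (h * gg n / Cmod (ep h p0 p1 n)) * ep h p0 p1 n.

Lemma phiex_eq n : (1 < PP)%R ->
  delta_h h phiex n - pcoef p0 p1 n * phiex n = ep h p0 p1 (S n) / RtoC (Cmod (ep h p0 p1 (S n))).
Proof.
  intro H1. unfold delta_h, phiex. rewrite !ep_S, !Cmod_mult.
  assert (E : gg (S n) = (gg n * Cmod (aa n) - 1)%R) by (pose proof (gg_step n H1); lra).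
  rewrite E. pose proof (Cmod_ep_pos n). pose proof (Cmod_aa_pos n).
  rewrite !RtoC_div by nra. rewrite !RtoC_mult, RtoC_minus.
  assert (RtoC (Cmod (ep h p0 p1 n)) <> 0) by (intro Hc; injection Hc; lra).
  assert (RtoC (Cmod (aa n)) <> 0) by (intro Hc; injection Hc; lra).
  pose proof hC. pose proof (ep_nz n). pose proof (aa_nz n).
  unfold aa in *. rewrite RtoC_mult. field. repeat split; auto.
Qed.

Lemma phiex_mod n : (1 < PP)%R -> Cmod (phiex n) = (h * gg n)%R.
Proof.
  intro H1. unfold phiex. rewrite Cmod_mult, Cmod_opp, Cmod_R.
  pose proof (Cmod_ep_pos n). pose proof (gg_pos n H1).
  rewrite Rabs_pos_eq. field. lra. apply Rlt_le, Rdiv_lt_0_compat; nra.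
Qed.

Lemma minimal (K' : R) : (1 < PP)%R -> (0 < K')%R -> (K' < KK1)%R -> ~ ulam_constant h p0 p1 K'.
Proof.
  intros H1 HK HKlt [_ Hul].
  assert (Hph : forall n, (Cmod (delta_h h phiex n - pcoef p0 p1 n * phiex n) <= 1)%R).
  { intro n. rewrite (phiex_eq n H1). pose proof (Cmod_ep_pos (S n)).
    assert (HR : RtoC (Cmod (ep h p0 p1 (S n))) <> 0) by (intro Hc; apply (f_equal fst) in Hc; change (Cmod (ep h p0 p1 (S n)) = 0%R) in Hc; lra).
    rewrite Cmod_div by exact HR. rewrite Cmod_R, Rabs_pos_eq by lra. right. field. lra. }
  destruct (Hul 1%R Rlt_0_1 phiex Hph) as [x [Hx Hb]].
  assert (Hc : x 0%nat = 0).
  { apply (unbounded_zero _ (K' * 1 + KK1)%R H1). intro n.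
    rewrite <- Cmod_mult, <- (sol_ep x n Hx).
    replace (x n) with (- (phiex n - x n) + phiex n) by ring.
    eapply Rle_trans. apply Cmod_triangle. rewrite Cmod_opp, phiex_mod by auto.
    pose proof (Hb n). pose proof (hgg_le n). lra. }
  assert (Hn : forall n, (h * gg n <= K')%R).
  { intro n. rewrite <- phiex_mod by auto. pose proof (Hb n).
    rewrite (sol_ep x n Hx), Hc in H. replace (phiex n - 0 * ep h p0 p1 n) with (phiex n) in H by ring.
    lra. }
  pose proof (Hn 0%nat). pose proof (Hn 1%nat). unfold gg in *. simpl in *.
  unfold KK1 in HKlt. replace (-1 + PP)%R with (PP - 1)%R in HKlt by ring.
  unfold Rmax in HKlt. destruct (Rle_dec _ _); lra.
Qed.

Lemma part2 (H1 : (PP < 1)%R) (eps : R) (phi x : nat -> C)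
  (hphi : forall n, (Cmod (delta_h h phi n - pcoef p0 p1 n * phi n) <= eps)%R)
  (hx : is_solution h p0 p1 x)
  (h0 : (Cmod (phi 0%nat - x 0%nat) < eps * h * ((1 + A1) / (1 - PP)))%R) :
  forall n, (Cmod (phi n - x n) < eps * h * Rmax ((1 + A0) / (1 - PP)) ((1 + A1) / (1 - PP)))%R.
Proof.
  pose proof A0pos; pose proof A1pos.
  assert (Hs : forall n, (Cmod (phi (S n) - x (S n)) <= Cmod (aa n) * Cmod (phi n - x n) + h * eps)%R).
  { intro n. rewrite (step_gen phi n), (sol_step x n hx).
    replace (aa n * phi n + h * (delta_h h phi n - pcoef p0 p1 n * phi n) - aa n * x n)
      with (aa n * (phi n - x n) + h * (delta_h h phi n - pcoef p0 p1 n * phi n)) by ring.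
    eapply Rle_trans. apply Cmod_triangle. rewrite !Cmod_mult, Cmod_R, Rabs_pos_eq by lra.
    pose proof (hphi n). nra. }
  assert (E0 : (A0 * (eps * h * ((1 + A1) / (1 - PP))) + h * eps = eps * h * ((1 + A0) / (1 - PP)))%R)
    by (unfold PP in *; field; lra).
  assert (E1 : (A1 * (eps * h * ((1 + A0) / (1 - PP))) + h * eps = eps * h * ((1 + A1) / (1 - PP)))%R)
    by (unfold PP in *; field; lra).
  assert (Hk : forall k, (Cmod (phi (2 * k)%nat - x (2 * k)%nat) < eps * h * ((1 + A1) / (1 - PP)))%R /\ (Cmod (phi (2 * k + 1)%nat - x (2 * k + 1)%nat) < eps * h * ((1 + A0) / (1 - PP)))%R).
  { induction k.
    - split. exact h0. simpl. pose proof (Hs 0%nat). rewrite Cmod_aa in H2. simpl in H2.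
      pose proof (Rmult_lt_compat_l A0 _ _ H h0). lra.
    - destruct IHk as [_ I2].
      assert (I3 : (Cmod (phi (2 * S k)%nat - x (2 * S k)%nat) < eps * h * ((1 + A1) / (1 - PP)))%R).
      { replace (2 * S k)%nat with (S (2 * k + 1)) by lia. pose proof (Hs (2 * k + 1)%nat).
        rewrite Cmod_aa, Nat.even_odd in H2.
        pose proof (Rmult_lt_compat_l A1 _ _ H0 I2). lra. }
      split. exact I3.
      replace (2 * S k + 1)%nat with (S (2 * S k)) by lia. pose proof (Hs (2 * S k)%nat).
      rewrite Cmod_aa, Nat.even_even in H2.
      pose proof (Rmult_lt_compat_l A0 _ _ H I3). lra. }
  assert (He : (0 <= eps)%R) by (pose proof (hphi 0%nat); pose proof (Cmod_ge_0 (delta_h h phi 0 - pcoef p0 p1 0 * phi 0%nat)); lra).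
  intro n. destruct (Nat.Even_or_Odd n) as [[k Hk']|[k Hk']]; subst n.
  - destruct (Hk k) as [I _]. eapply Rlt_le_trans. exact I.
    apply Rmult_le_compat_l. nra. apply Rmax_r.
  - destruct (Hk k) as [_ I]. eapply Rlt_le_trans. exact I.
    apply Rmult_le_compat_l. nra. apply Rmax_l.
Qed.
End S.

Theorem theorem2p2 (h : R) (p0 p1 : C)
  (hpos : (0 < h)%R)
  (hp0 : p0 <> - (1 / RtoC h)) (hp1 : p1 <> - (1 / RtoC h))
  (hp01 : p0 <> p1)
  (hprod_pos : (0 < Cmod (1 + RtoC h * p0) * Cmod (1 + RtoC h * p1))%R)
  (hprod_ne1 : (Cmod (1 + RtoC h * p0) * Cmod (1 + RtoC h * p1) <> 1)%R)
  (eps : R) (heps : (0 < eps)%R) (phi : nat -> C)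
  (hphi : forall n, (Cmod (delta_h h phi n - pcoef p0 p1 n * phi n) <= eps)%R) :
  let a0 := Cmod (1 + RtoC h * p0) in
  let a1 := Cmod (1 + RtoC h * p1) in
  let K1 := (h * Rmax ((1 + a0) / (-1 + a0 * a1)) ((1 + a1) / (-1 + a0 * a1)))%R in
  ((1 < a0 * a1)%R ->
     exists L : C,
       filterlim (fun n => phi n / ep h p0 p1 n) eventually (locally L) /\
       is_solution h p0 p1 (fun n => L * ep h p0 p1 n) /\
       (forall n, (Cmod (phi n - L * ep h p0 p1 n) <= K1 * eps)%R) /\
       (forall y : nat -> C, is_solution h p0 p1 y ->
          (forall n, (Cmod (phi n - y n) <= K1 * eps)%R) ->
          forall n, y n = L * ep h p0 p1 n) /\
       min_ulam_constant h p0 p1 K1) /\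
  ((a0 * a1 < 1)%R ->
     forall x : nat -> C, is_solution h p0 p1 x ->
       (Cmod (phi 0%nat - x 0%nat) < eps * h * ((1 + a1) / (1 - a0 * a1)))%R ->
       forall n, (Cmod (phi n - x n) <
         eps * h * Rmax ((1 + a0) / (1 - a0 * a1)) ((1 + a1) / (1 - a0 * a1)))%R).
Proof.
  intros a0 a1 K1.
  change a0 with (A0 h p0) in *. change a1 with (A1 h p1) in *.
  change K1 with (KK1 h p0 p1). clear K1 a0 a1.
  change (Cmod (1 + RtoC h * p0) * Cmod (1 + RtoC h * p1))%R with (PP h p0 p1) in hprod_pos.
  change (A0 h p0 * A1 h p1)%R with (PP h p0 p1).
  split.
  - intro H1.
    assert (Hb : forall eps' phi', (0 < eps')%R ->
      (forall n, (Cmod (delta_h h phi' n - pcoef p0 p1 n * phi' n) <= eps')%R) ->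
      forall n, (Cmod (phi' n - LL h p0 p1 phi' * ep h p0 p1 n) <= KK1 h p0 p1 * eps')%R).
    { intros eps' phi' He Hp n. eapply Rle_trans. apply (phi_bound h p0 p1 hpos hprod_pos H1 eps' phi' He Hp n).
      pose proof (hgg_le h p0 p1 hpos n). nra. }
    exists (LL h p0 p1 phi). split; [|split; [|split; [|split]]].
    + apply (uu_lim h p0 p1 hpos hprod_pos H1 eps phi heps hphi).
    + apply ep_sol; auto.
    + apply Hb; auto.
    + intros y Hy Hyb n. rewrite (sol_ep h p0 p1 hpos y n Hy).
      assert (y 0%nat - LL h p0 p1 phi = 0).
      { apply (unbounded_zero h p0 p1 hprod_pos _ (2 * (KK1 h p0 p1 * eps))%R H1). intro m.
        rewrite <- Cmod_mult.
        replace ((y 0%nat - LL h p0 p1 phi) * ep h p0 p1 m) with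
          ((phi m - LL h p0 p1 phi * ep h p0 p1 m) - (phi m - y m)).
        2:{ rewrite (sol_ep h p0 p1 hpos y m Hy). ring. }
        unfold Cminus at 1. eapply Rle_trans. apply Cmod_triangle. rewrite Cmod_opp.
        pose proof (Hb eps phi heps hphi m). pose proof (Hyb m). lra. }
      replace (y 0%nat) with (LL h p0 p1 phi); [reflexivity|].
      replace (y 0%nat) with (y 0%nat - LL h p0 p1 phi + LL h p0 p1 phi) by ring. rewrite H. ring.
    + split.
      * split. apply KK1_pos; auto. intros eps' He phi' Hp. exists (fun n => LL h p0 p1 phi' * ep h p0 p1 n).
        split. apply ep_sol; auto. apply Hb; auto.
      * intros K' HK' HKlt. apply minimal; auto.
  - intros H1 x Hx H0 n. apply (part2 h p0 p1 hpos hprod_pos H1 eps phi x hphi Hx H0 n).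
Qed.
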